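(* Let $(X,d)$ be a metric space and let $U\subseteq F_{USCG}(X)$. Then $U$ is totally bounded in $(F_{USCG}(X),H_{\rm end})$ if and only if $U(\alpha)=\bigcup_{u\in U}[u]_\alpha$ is totally bounded in $X$ for each $\alpha\in(0,1]$.
   Context: A fuzzy set on $X$ is a function $u:X\to[0,1]$, with $\alpha$-cuts $[u]_\alpha=\{x: u(x)\ge\alpha\}$ for $\alpha\in(0,1]$ and $[u]_0=\overline{\{u>0\}}$. $F_{USC}(X)$ is the set of fuzzy sets with all $\alpha$-cuts ($\alpha\in[0,1]$) non-empty and closed; $F_{USCG}(X)=\{u\in F_{USC}(X): [u]_\alpha\text{ compact for all }\alpha\in(0,1]\}$. $X\times[0,1]$ is metrized by $\overline{d}((x,\alpha),(y,\beta))=d(x,y)+|\alpha-\beta|$; ${\rm end}\,u=\{(x,t)\in X\times[0,1]: u(x)\ge t\}$; $H_{\rm end}(u,v)=H({\rm end}\,u,{\rm end}\,v)$ where $H$ is the Hausdorff distance $H(A,B)=\max\{\sup_{a\in A}\inf_{b\in B}\overline{d}(a,b),\sup_{b\in B}\inf_{a\in A}\overline{d}(a,b)\}$. *)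

(* Defs.v *)
From Stdlib Require List.
From mathcomp Require Import all_boot all_order all_algebra.
From mathcomp Require Import all_classical all_reals ereal.
Set Implicit Arguments. Unset Strict Implicit. Unset Printing Implicit Defensive.
Import Order.TTheory GRing.Theory Num.Theory.
Local Open Scope classical_set_scope.
Local Open Scope ring_scope.

Section Defs.
Variables (R : realType) (X : Type) (d : X -> X -> R).

Definition is_metric : Prop :=
  (forall x y, 0 <= d x y) /\ (forall x y, d x y = 0 <-> x = y) /\
  (forall x y, d x y = d y x) /\ (forall x y z, d x z <= d x y + d y z).

Definition open_ball (x : X) (e : R) : set X := [set y | d x y < e].

Definition d_open (O : set X) : Prop :=
  forall x, O x -> exists2 e, 0 < e & open_ball x e `<=` O.

Definition d_closure (A : set X) : set X :=
  [set x | forall e, 0 < e -> exists y, A y /\ d x y < e].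

Definition d_closed (A : set X) : Prop := d_closure A `<=` A.

Definition d_compact (A : set X) : Prop :=
  forall (I : Type) (O : I -> set X), (forall i, d_open (O i)) ->
    A `<=` \bigcup_(i in setT) O i ->
    exists s : seq I, A `<=` [set x | exists2 i, Stdlib.Lists.List.In i s & O i x].

Definition d_totally_bounded (A : set X) : Prop :=
  forall e, 0 < e -> exists s : seq X,
    A `<=` [set x | exists2 c, Stdlib.Lists.List.In c s & d c x < e].

Definition fuzzy (u : X -> R) : Prop := forall x, 0 <= u x <= 1.

Definition cut (u : X -> R) (a : R) : set X :=
  if a == 0 then d_closure [set x | 0 < u x] else [set x | a <= u x].

Definition F_USC : set (X -> R) :=
  [set u | fuzzy u /\ forall a, 0 <= a <= 1 ->
       cut u a !=set0 /\ d_closed (cut u a)].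

Definition F_USCG : set (X -> R) :=
  [set u | F_USC u /\ forall a, 0 < a <= 1 -> d_compact (cut u a)].

Definition dbar (p q : X * R) : R := d p.1 q.1 + `|p.2 - q.2|.

Definition endo (u : X -> R) : set (X * R) :=
  [set p | 0 <= p.2 <= 1 /\ p.2 <= u p.1].

Definition hausdorff (A B : set (X * R)) : \bar R :=
  Order.max
    (ereal_sup [set ereal_inf [set (dbar a b)%:E | b in B] | a in A])
    (ereal_sup [set ereal_inf [set (dbar a b)%:E | a in A] | b in B]).

Definition H_end (u v : X -> R) : \bar R := hausdorff (endo u) (endo v).

Definition Hend_totally_bounded (U : set (X -> R)) : Prop :=
  forall e, 0 < e -> exists s : seq (X -> R),
    (forall v, Stdlib.Lists.List.In v s -> F_USCG v) /\
    forall u, U u -> exists v, Stdlib.Lists.List.In v s /\ (H_end u v < e%:E)%E.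

Definition Ucut (U : set (X -> R)) (a : R) : set X :=
  \bigcup_(u in U) cut u a.
End Defs.

(* Main.v *)
Require Import Defs.
From mathcomp Require Import all_boot all_order all_algebra.
From mathcomp Require Import all_classical all_reals ereal.
Import Order.TTheory GRing.Theory Num.Theory.
Local Open Scope classical_set_scope.
Local Open Scope ring_scope.
From mathcomp Require Import lra.
Set Implicit Arguments. Unset Strict Implicit.

Section Gen.
Variables (R : realType) (X : Type) (d : X -> X -> R).
Hypothesis hd : is_metric d.

Lemma d_ge0 x y : 0 <= d x y. Proof. by case: hd. Qed.
Lemma d_xx x : d x x = 0. Proof. by case: hd => _ [h _]; apply: (proj2 (h _ _)). Qed.
Lemma d_eq x y : d x y = 0 -> x = y. Proof. by case: hd => _ [h _]; apply: (proj1 (h _ _)). Qed.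
Lemma d_sym x y : d x y = d y x. Proof. by case: hd => _ [_ [h _]]. Qed.
Lemma d_tri x y z : d x z <= d x y + d y z. Proof. by case: hd => _ [_ [_ h]]. Qed.

Lemma ball_open x e : d_open d (open_ball d x e).
Proof.
move=> y /= hy; exists (e - d x y); first by rewrite subr_gt0.
move=> z /= hz; apply: (le_lt_trans (d_tri x y z)).
by rewrite -ltrBrDl.
Qed.

Lemma compact_tb A : d_compact d A -> d_totally_bounded d A.
Proof.
move=> hA e e0.
have [s hs] : exists s : seq X, A `<=` [set x | exists2 i, List.In i s & open_ball d i e x].
  apply: (hA X (fun c => open_ball d c e) (fun c => @ball_open c e)).
  by move=> x Ax; exists x => //; rewrite /open_ball /= d_xx.
by exists s => x /hs [c c1 c2]; exists c.
Qed.

Lemma tb_union (I : Type) (s : seq I) (A : I -> set X) :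
  (forall i, List.In i s -> d_totally_bounded d (A i)) ->
  d_totally_bounded d [set x | exists2 i, List.In i s & A i x].
Proof.
elim: s => [_ e e0|i s IH H e e0]; first by exists [::] => x [].
have [s1 h1] := H i (or_introl erefl) e e0.
have [s2 h2] := IH (fun j hj => H j (or_intror hj)) e e0.
exists (s1 ++ s2) => x [j [<-|hj] hx].
  by have [c c1 c2] := h1 _ hx; exists c => //; apply: List.in_or_app; left.
have [c c1 c2] := h2 x (ex_intro2 _ _ j hj hx).
by exists c => //; apply: List.in_or_app; right.
Qed.

Lemma closure_closure A : d_closure d (d_closure d A) `<=` d_closure d A.
Proof.
move=> x hx e e0.
have e20 : 0 < e / 2 by rewrite divr_gt0.
have [y [hy1 hy2]] := hx _ e20.
have [z [hz1 hz2]] := hy1 _ e20.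
exists z; split => //; apply: (le_lt_trans (d_tri x y z)).
by rewrite [e](splitr e) ltrD.
Qed.

Lemma closure_sub A : A `<=` d_closure d A.
Proof. by move=> x Ax e e0; exists x; rewrite d_xx. Qed.

Lemma finite_sep (A : set X) x (L : seq X) :
  (forall c, List.In c L -> A c -> 0 < d x c) ->
  exists2 e, 0 < e & forall c, List.In c L -> A c -> e <= d x c.
Proof.
elim: L => [_|a L IH H]; first by exists 1.
have [e e0 he] := IH (fun c hc => H c (or_intror hc)).
case: (pselect (A a)) => Aa.
  exists (Num.min e (d x a)); first by rewrite lt_min e0 H //; left.
  move=> c [<-|hc] Ac; first by rewrite ge_min lexx orbT.
  by rewrite ge_min he.
by exists e => // c [<-|hc] Ac; [by [] | apply: he].
Qed.

Lemma finite_closed (A : set X) (L : seq X) :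
  A `<=` [set x | List.In x L] -> d_closed d A.
Proof.
move=> AL x hx; apply/not_notP => nAx.
have [e e0 he] : exists2 e, 0 < e & forall c, List.In c L -> A c -> e <= d x c.
  apply: finite_sep => c _ Ac; rewrite lt_neqAle d_ge0 andbT.
  by apply/eqP => /esym /d_eq xc; apply: nAx; rewrite xc.
have [y [Ay hy]] := hx e e0.
by move: (he y (AL _ Ay) Ay); rewrite leNgt hy.
Qed.

Lemma finite_compact (A : set X) (L : seq X) :
  A `<=` [set x | List.In x L] -> d_compact d A.
Proof.
move=> AL I O _ cov.
suff [s hs] : exists s : seq I, forall c, List.In c L -> A c ->
    exists2 i, List.In i s & O i c.
  by exists s => x Ax; apply: hs => //; apply: AL.
elim: L {AL} => [|a L [s hs]]; first by exists [::].
case: (pselect (A a)) => Aa.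
  have [i _ hi] := cov a Aa.
  exists (i :: s) => c [<-|hc] Ac; first by exists i => //; left.
  by have [j j1 j2] := hs c hc Ac; exists j => //; right.
by exists s => c [<-|hc] Ac; [by [] | apply: hs].
Qed.
End Gen.

Section Fold.
Variables (R : realType) (I : Type).

Definition fmax (h : I -> R) (r : seq I) : R :=
  foldr (fun i acc => Num.max (h i) acc) 0 r.

Lemma fmax_ge0 h r : 0 <= fmax h r.
Proof. by elim: r => [|i r IH] //=; rewrite le_max IH orbT. Qed.

Lemma fmax_ge h r i : List.In i r -> h i <= fmax h r.
Proof.
elim: r => [[]|j r IH] /= [->|hi]; first by rewrite le_max lexx.
by rewrite le_max IH ?orbT.
Qed.

Lemma fmax_le h r b : 0 <= b -> (forall i, h i <= b) -> fmax h r <= b.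
Proof. by move=> b0 hb; elim: r => [|i r IH] //=; rewrite ge_max hb IH. Qed.

Lemma fmax_ex h r s : 0 < s -> s <= fmax h r -> exists2 i, List.In i r & s <= h i.
Proof.
move=> s0; elim: r => [|i r IH] /=; first by rewrite leNgt s0.
rewrite le_max => /orP[hi|/IH [j j1 j2]]; first by exists i => //; left.
by exists j => //; right.
Qed.
End Fold.

Lemma mem_In (T : eqType) (x : T) s : x \in s -> List.In x s.
Proof. by elim: s => [|a s IH] //=; rewrite inE => /orP[/eqP->|/IH]; [left|right]. Qed.

Lemma nth_List (T : Type) (x0 : T) s n : nth x0 s n = List.nth n s x0.
Proof. by elim: s n => [|a s IH] [|n] //=. Qed.

Lemma tnth_In (T : Type) (s : seq T) (i : 'I_(size s)) : List.In (tnth (in_tuple s) i) s.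
Proof.
rewrite (tnth_nth (tnth (in_tuple s) i)) /= nth_List.
by apply: List.nth_In; apply/ssrnat.ltP; rewrite ltn_ord.
Qed.

Lemma In_tnth (T : Type) (s : seq T) c : List.In c s ->
  exists i : 'I_(size s), tnth (in_tuple s) i = c.
Proof.
move=> /(List.In_nth _ _ c) [n [/ssrnat.ltP hn hc]].
by exists (Ordinal hn); rewrite (tnth_nth c) /= nth_List.
Qed.

Lemma cutE (R : realType) (X : Type) (d : X -> X -> R) u a :
  a != 0 -> cut d u a = [set x | a <= u x].
Proof. by rewrite /cut => /negbTE ->. Qed.

Lemma forward (R : realType) (X : Type) (d : X -> X -> R)
  (hd : is_metric d) (U : set (X -> R)) (hU : U `<=` F_USCG d) :
  Hend_totally_bounded d U ->
  (forall a : R, 0 < a <= 1 -> d_totally_bounded d (Ucut d U a)).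
Proof.
move=> H a /andP[a0 a1] e e0.
have a20 : 0 < a / 2 by rewrite divr_gt0.
have e20 : 0 < e / 2 by rewrite divr_gt0.
pose eps := Num.min (a / 2) (e / 2).
have eps0 : 0 < eps by rewrite lt_min a20 e20.
have [s [hs1 hs2]] := H eps eps0.
have tbT : d_totally_bounded d
    [set y | exists2 v, List.In v s & cut d v (a / 2) y].
  apply: tb_union => v hv; apply: compact_tb => //.
  have [_ hc] := hs1 v hv; apply: hc; rewrite a20 /=.
  by rewrite ler_pdivrMr // (le_trans a1) // ler_pMr // ler1n.
have [s2 hs2'] := tbT _ e20.
exists s2 => x [u Uu]; rewrite cutE ?gt_eqF // => /= hux.
have [v [hv hH]] := hs2 u Uu.
have pu : endo u (x, a) by rewrite /endo /= (ltW a0) a1.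
have : (ereal_inf [set (dbar d (x, a) b)%:E | b in endo v] < eps%:E)%E.
  apply: le_lt_trans hH; rewrite /H_end /hausdorff.
  rewrite le_max; apply/orP; left; apply: ereal_sup_ubound.
  by exists (x, a).
move=> /ereal_inf_lt [_ [[y t] hb <-]]; rewrite lte_fin /dbar /= => hlt.
have [c c1 c2] : exists2 c, List.In c s2 & d c y < e / 2.
  apply: hs2'; exists v => //; rewrite cutE ?gt_eqF //=.
  move: hb => [/andP[t0 t1] tv]; apply: le_trans tv.
  have h1 : eps <= a / 2 by rewrite ge_min lexx.
  have h2 := ler_norm (a - t); have h3 := d_ge0 hd x y.
  rewrite /=; lra.
exists c => //.
have h1 : eps <= e / 2 by rewrite ge_min lexx orbT.
have h3 := d_ge0 hd x y; have h4 := d_tri hd c y x; rewrite (d_sym hd y x) in h4.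
have h5 := normr_ge0 (a - t).
lra.
Qed.

Lemma backward (R : realType) (X : Type) (d : X -> X -> R)
  (hd : is_metric d) (U : set (X -> R)) (hU : U `<=` F_USCG d) :
  (forall a : R, 0 < a <= 1 -> d_totally_bounded d (Ucut d U a)) ->
  Hend_totally_bounded d U.
Proof.
move=> H e e0.
pose eps := e / 3.
have eps0 : 0 < eps by rewrite divr_gt0.
pose m := (Num.truncn (eps^-1)).+1.
pose M : R := m%:R.
have M0 : 0 < M by rewrite ltr0n.
have M1 : 1 <= M by rewrite ler1n.
pose iM := M^-1.
have iMM : iM * M = 1 by rewrite mulVf // gt_eqF.
have iM0 : 0 < iM by rewrite invr_gt0.
have iMe : iM < eps.
  have h : eps^-1 < M := truncnS_gt _.
  rewrite /iM -(invrK eps) ltf_pV2 ?posrE ?invr_gt0 //.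
have iM1 : iM <= 1 by rewrite /iM invr_le1 // unitfE gt_eqF.
have [S hS] := H iM (introT andP (conj iM0 iM1)) eps eps0.
pose N := size S.
pose cS (i : 'I_N) : X := tnth (in_tuple S) i.
pose V (f : {ffun 'I_N -> 'I_m.+1}) : X -> R := fun x =>
  fmax (fun i => if `[< cS i = x >] then (f i)%:R * iM else 0) (enum 'I_N).
have inN : forall i : 'I_N, List.In i (enum 'I_N) by move=> i; apply: mem_In; rewrite mem_enum.
exists (List.filter (fun v => `[< F_USCG d v >]) (List.map V (enum (@predT {ffun 'I_N -> 'I_m.+1})))).
split.
  by move=> v /List.filter_In [_ /asboolP].
move=> u Uu.
pose P (i : 'I_N) (k : 'I_m.+1) := (k = 0%N :> nat) \/
   exists y, (k%:R * iM <= u y) /\ d (cS i) y < eps.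
pose fu := [ffun i => [arg max_(k > (ord0 : 'I_m.+1) | `[< P i k >]) (k : nat)]].
have F1 : forall i (k : 'I_m.+1), P i k -> (k <= fu i)%N.
  move=> i k Pk; rewrite /fu ffunE.
  by case: arg_maxnP => [|j _ hj]; [apply/asboolP; left | apply/hj/asboolP].
have F2 : forall i, (0 < fu i)%N -> exists y, ((fu i)%:R * iM <= u y) /\ d (cS i) y < eps.
  move=> i; rewrite /fu ffunE.
  case: arg_maxnP => [|j /asboolP [->//|//] _]; by apply/asboolP; left.
have F3 : forall i, (fu i <= m)%N by move=> i; rewrite -ltnS ltn_ord.
have Fle1 : forall i, (fu i)%:R * iM <= 1.
  move=> i; have h : (fu i)%:R <= M by rewrite ler_nat F3.
  by rewrite [leRHS](_ : 1 = M * iM) ?ler_pM2r // mulrC.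
pose v := V fu.
have V1 : forall x, 0 <= v x <= 1.
  move=> x; apply/andP; split; first exact: fmax_ge0.
  apply: fmax_le => // j.
  by case: (asboolP _) => _; [apply: Fle1 | apply: ler01].
have V2 : forall x s, 0 < s -> s <= v x -> exists2 i, cS i = x & s <= (fu i)%:R * iM.
  move=> x s s0 /(fmax_ex s0) [i _]; case: (asboolP _) => [eq h|_ h].
    by exists i.
  by move: (lt_le_trans s0 h); rewrite ltxx.
have V3 : forall i, (fu i)%:R * iM <= v (cS i).
  move=> i; apply: le_trans (fmax_ge _ (inN i)).
  by rewrite asboolT.
have hu1 : exists x1, 1 <= u x1.
  have [[_ hc] _] := hU u Uu.
  have [[x1 hx1] _] := hc 1 (introT andP (conj ler01 (lexx 1))).
  by exists x1; move: hx1; rewrite cutE ?oner_neq0.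
have hUc : forall x, iM <= u x -> exists i, d (cS i) x < eps.
  move=> x hx; have [c c1 c2] : exists2 c, List.In c S & d c x < eps.
    by apply: hS; exists u => //; rewrite cutE // gt_eqF.
  by have [i hi] := In_tnth c1; exists i; rewrite /cS /= hi.
have [w hw] : exists w, 1 <= v w.
  have [x1 hx1] := hu1.
  have [i hi] := hUc x1 (le_trans iM1 hx1).
  have Pm : P i ord_max by right; exists x1; rewrite /= -/M mulrC iMM.
  have := F1 _ _ Pm; rewrite /= => hm.
  exists (cS i); apply: le_trans (V3 i).
  have -> : fu i = m :> nat by apply/eqP; rewrite eqn_leq F3.
  by rewrite -/M mulrC iMM.
have cutfin : forall a, 0 < a -> cut d v a `<=` [set x | List.In x S].
  move=> a a0 x; rewrite cutE ?gt_eqF //= => hx.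
  have [i <- _] := V2 x a a0 hx.
  exact: tnth_In.
have Fv : F_USCG d v.
  split; last first.
    by move=> a /andP[a0 _]; apply: finite_compact (cutfin a a0).
  split; first by move=> x; apply: V1.
  move=> a /andP[a0 a1]; have [->|an0] := eqVneq a 0.
    split; first by exists w; rewrite /cut eqxx; apply: closure_sub => //=; apply: lt_le_trans hw.
    by rewrite /cut eqxx; apply: closure_closure.
  have a0' : 0 < a by rewrite lt_neqAle eq_sym an0 a0.
  split; first by exists w; rewrite cutE //=; apply: le_trans hw.
  exact: finite_closed (cutfin a a0').
exists v; split.
  apply/List.filter_In; split; last by apply/asboolP.
  apply: List.in_map; apply: mem_In; rewrite mem_enum.
  done.
have hfz : forall x, 0 <= u x.
  by have [[hf _] _] := hU u Uu; move=> x; case/andP: (hf x).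
have bound : (H_end d u v <= (2 * eps)%:E)%E.
  rewrite /H_end /hausdorff ge_max; apply/andP; split.
    apply: ge_ereal_sup => _ [[x t] [/andP[t0 t1] tu] <-].
    apply: ge_ereal_inf.
    pose k := Num.truncn (t * M).
    have /andP[hk1 hk2] : k%:R <= t * M < k.+1%:R.
      by apply: truncn_itv; rewrite mulr_ge0 // ltW.
    have [k0|kpos] := eqVneq k 0%N.
      exists (dbar d (x, t) (x, 0))%:E; first by exists (x, 0) => //; rewrite /endo /= lexx ler01 (andP (V1 x)).1.
      rewrite /dbar /= d_xx // subr0 ger0_norm // add0r lee_fin.
      have : t < iM.
        by rewrite /iM -[M^-1]mul1r ltr_pdivlMr //; move: hk2; rewrite k0.
      lra.
    have kle : (k < m.+1)%N.
      rewrite ltnS -(ler_nat R); apply: le_trans hk1 _.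
      by rewrite -[X in _ <= X]mul1r ler_pM2r.
    pose kk : 'I_m.+1 := Ordinal kle.
    have hkt : k%:R * iM <= t by rewrite /iM ler_pdivrMr.
    have htk : t < k%:R * iM + iM.
      by rewrite /iM -[X in _ < _ + X]mul1r -mulrDl ltr_pdivlMr // natr1.
    have hkiM : iM <= k%:R * iM.
      by rewrite -[X in X <= _]mul1r ler_pM2r // ler1n lt0n.
    have [i hi] := hUc x (le_trans hkiM (le_trans hkt tu)).
    have Pk : P i kk by right; exists x; split => //; apply: le_trans hkt tu.
    have hki := F1 _ _ Pk.
    have hkv : k%:R * iM <= (fu i)%:R * iM by rewrite ler_pM2r // ler_nat.
    exists (dbar d (x, t) (cS i, k%:R * iM))%:E.
      exists (cS i, k%:R * iM) => //; rewrite /endo /=; split.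
        apply/andP; split; [apply: mulr_ge0; [exact: ler0n | exact: ltW] | exact: le_trans hkv (Fle1 i)].
      exact: le_trans hkv (V3 i).
    rewrite /dbar /= lee_fin (d_sym hd x) ger0_norm ?subr_ge0 //.
    lra.
  apply: ge_ereal_sup => _ [[y s] [/andP[s0 s1] sv] <-].
  apply: ge_ereal_inf.
  have [sz|sp] := eqVneq s 0.
    exists (dbar d (y, 0) (y, s))%:E; first by exists (y, 0) => //; rewrite /endo /= lexx ler01 hfz.
    by rewrite /dbar /= d_xx // sz subrr normr0 addr0 lee_fin mulr_ge0 // ltW.
  have s0' : 0 < s by rewrite lt_neqAle eq_sym sp s0.
  have [i hi hsi] := V2 y s s0' sv.
  have fpos : (0 < fu i)%N.
    rewrite lt0n; apply/eqP => f0; move: hsi; rewrite f0 mul0r => hs.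
    by move: (lt_le_trans s0' hs); rewrite ltxx.
  have [z [hz1 hz2]] := F2 i fpos.
  exists (dbar d (z, s) (y, s))%:E.
    by exists (z, s) => //; rewrite /endo /= s0 s1 (le_trans hsi hz1).
  rewrite /dbar /= subrr normr0 addr0 lee_fin (d_sym hd z) -hi.
  lra.
apply: le_lt_trans bound _; rewrite lte_fin.
rewrite /eps; lra.
Qed.

Unset Implicit Arguments.
Theorem theorem5p8 (R : realType) (X : Type) (d : X -> X -> R)
  (hd : is_metric d) (U : set (X -> R)) (hU : U `<=` F_USCG d) :
  Hend_totally_bounded d U <->
  (forall a : R, 0 < a <= 1 -> d_totally_bounded d (Ucut d U a)).
Proof.
split; [exact: forward | exact: backward].
Qed.
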